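(* Let $0<\lambda\le\lambda_0$. Let $\boldsymbol\alpha_0^\star$ be the optimal solution of $\max_{\boldsymbol\alpha\ge\mathbf0}D_{\lambda_0}(\boldsymbol\alpha)$, and let $\boldsymbol\alpha_0\in\mathbb R^{2nK}$ and $\epsilon\ge0$ satisfy $\|\boldsymbol\alpha_0-\boldsymbol\alpha_0^\star\|_2\le\epsilon$. Let $\mathbf m^\star$ be the optimal solution of $\min_{\mathbf m\ge\mathbf0}P_\lambda(\mathbf m)$. For $k\in[p]$ define $$\lambda_a=\frac{\lambda_0\big(2\epsilon\|\mathbf C_{k,:}\|_2+\|\boldsymbol\alpha_0\|_2\|\mathbf C_{k,:}\|_2+\mathbf C_{k,:}\boldsymbol\alpha_0\big)}{2\lambda_0+\|\boldsymbol\alpha_0\|_2\|\mathbf C_{k,:}\|_2-\mathbf C_{k,:}\boldsymbol\alpha_0}.$$ If $\lambda_a\le\lambda\le\lambda_0$, then $m^\star_k=0$.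
   Context: Let $n,K,p\ge1$ be integers, $[n]=\{1,\dots,n\}$. For each $i\in[n]$ let $\mathbf x_i\in\mathbb R^p$ have nonnegative entries and let $\mathcal D_i,\mathcal S_i\subseteq[n]$ be sets of size $K$. Put $\mathbf c_{ij}=(\mathbf x_i-\mathbf x_j)\circ(\mathbf x_i-\mathbf x_j)$ (entrywise product). Vectors in $\mathbb R^{2nK}$ are indexed by the pairs $(i,l)$, $l\in\mathcal D_i$ (''different-class pairs'') and $(i,j)$, $j\in\mathcal S_i$ (''same-class pairs''). $\mathbf C\in\mathbb R^{p\times2nK}$ has column $\mathbf c_{il}$ for each different-class pair and $-\mathbf c_{ij}$ for each same-class pair; $\mathbf C_{k,:}$ is its $k$-th row. Fix $L\ge U\ge0$, $\eta>0$; let $\mathbf t\in\mathbb R^{2nK}$ have entry $L$ at different-class pairs and $-U$ at same-class pairs; $\ell_s(x)=([s-x]_+)^2$ with $[z]_+=\max\{z,0\}$ (entrywise for vectors); $\mathbf1$ is the all-ones vector. For $\lambda>0$, $$P_\lambda(\mathbf m)=\sum_{i\in[n]}\Big[\sum_{l\in\mathcal D_i}\ell_L(\mathbf m^\top\mathbf c_{il})+\sum_{j\in\mathcal S_i}\ell_{-U}(-\mathbf m^\top\mathbf c_{ij})\Big]+\lambda\Big(\mathbf m^\top\mathbf1+\frac\eta2\|\mathbf m\|_2^2\Big)\ (\mathbf m\in\mathbb R^p_{\ge0}),$$ $$D_\lambda(\boldsymbol\alpha)=-\frac14\|\boldsymbol\alpha\|_2^2+\mathbf t^\top\boldsymbol\alpha-\frac{\lambda\eta}2\Big\|\frac1{\lambda\eta}[\mathbf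 C\boldsymbol\alpha-\lambda\mathbf1]_+\Big\|_2^2\ (\boldsymbol\alpha\in\mathbb R^{2nK}_{\ge0}).$$ *)

(* Defs.v *)
From mathcomp Require Import all_boot all_order all_algebra.
From mathcomp Require Import reals.
Set Implicit Arguments. Unset Strict Implicit. Unset Printing Implicit Defensive.
Import Order.TTheory GRing.Theory Num.Theory.
Local Open Scope ring_scope.

Section Defs.
Variables (R : realType) (n K p : nat).

(* Index set of R^{2nK}: a triple (i, r, b) with i in [n], r < K, and b = true
   for the different-class pair (i, d i r) and b = false for the same-class
   pair (i, s i r).  Here d i, s i : 'I_K -> 'I_n enumerate D_i and S_i. *)
Definition pidx := ('I_n * 'I_K * bool)%type.

Definition partner (d s : 'I_n -> 'I_K -> 'I_n) (q : pidx) : 'I_n :=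
  if q.2 then d q.1.1 q.1.2 else s q.1.1 q.1.2.

Definition cvec (x : 'I_n -> 'I_p -> R) (i j : 'I_n) (k : 'I_p) : R :=
  (x i k - x j k) ^+ 2.

Definition Cmat (x : 'I_n -> 'I_p -> R) (d s : 'I_n -> 'I_K -> 'I_n)
  (k : 'I_p) (q : pidx) : R :=
  if q.2 then cvec x q.1.1 (partner d s q) k else - cvec x q.1.1 (partner d s q) k.

Definition tvec (L U : R) (q : pidx) : R := if q.2 then L else - U.

Definition pos_part (z : R) : R := Num.max z 0.

Definition ell (sh z : R) : R := (pos_part (sh - z)) ^+ 2.

Definition dotp (m : 'I_p -> R) (v : 'I_p -> R) : R := \sum_k m k * v k.

Definition norm2_p (m : 'I_p -> R) : R := Num.sqrt (\sum_k m k ^+ 2).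
Definition norm2_q (a : pidx -> R) : R := Num.sqrt (\sum_q a q ^+ 2).

Definition Crow_mul x d s (k : 'I_p) (a : pidx -> R) : R :=
  \sum_q Cmat x d s k q * a q.

Definition Crow_norm x d s (k : 'I_p) : R := norm2_q (Cmat x d s k).

Definition Pobj x d s (L U eta lam : R) (m : 'I_p -> R) : R :=
  \sum_(i : 'I_n)
     (\sum_(r < K) ell L (dotp m (cvec x i (d i r)))
    + \sum_(r < K) ell (- U) (- dotp m (cvec x i (s i r))))
  + lam * (\sum_k m k + eta / 2 * \sum_k m k ^+ 2).

Definition Dobj x d s (L U eta lam : R) (a : pidx -> R) : R :=
  - (1 / 4) * \sum_q a q ^+ 2 + \sum_q tvec L U q * a q
  - lam * eta / 2 *
      \sum_k ((lam * eta)^-1 * pos_part (Crow_mul x d s k a - lam)) ^+ 2.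

Definition lambda_a x d s (lam0 eps : R) (a0 : pidx -> R) (k : 'I_p) : R :=
  lam0 * (2 * eps * Crow_norm x d s k + norm2_q a0 * Crow_norm x d s k
          + Crow_mul x d s k a0)
  / (2 * lam0 + norm2_q a0 * Crow_norm x d s k - Crow_mul x d s k a0).

End Defs.

(* Main.v *)
Require Import Defs.
From mathcomp Require Import all_boot all_order all_algebra.
From mathcomp Require Import reals.
From mathcomp Require Import ring lra.
Import Order.TTheory GRing.Theory Num.Theory.
Local Open Scope ring_scope.
Set Implicit Arguments. Unset Strict Implicit. Unset Printing Implicit Defensive.

Section Gen.
Variable R : realType.
Implicit Types (z a b c t : R).

Lemma eqle (u v : R) : u = v -> u <= v.
Proof. by move->. Qed.

Lemma ppE z : pos_part z = if z < 0 then 0 else z.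
Proof. by rewrite /pos_part maxElt. Qed.

Lemma pp_ge0 z : 0 <= pos_part z.
Proof. rewrite ppE; case: ltP => //. Qed.

Lemma pp_ge z : z <= pos_part z.
Proof. rewrite ppE; case: ltP => // h; exact: ltW. Qed.

Lemma pp_id z : 0 <= z -> pos_part z = z.
Proof. rewrite ppE; case: ltP => // h1 h2; lra. Qed.

Lemma pp_0 z : z <= 0 -> pos_part z = 0.
Proof. rewrite ppE; case: ltP => // h1 h2; lra. Qed.

Lemma pp_cases z : (0 <= z /\ pos_part z = z) \/ (z < 0 /\ pos_part z = 0).
Proof. rewrite ppE; case: ltP => h; [right|left]; split => //. Qed.

Lemma pp_scale c z : 0 <= c -> pos_part (c * z) = c * pos_part z.
Proof.
move=> hc; case: (pp_cases z) => [[h1 ->]|[h1 ->]].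
  by rewrite pp_id // mulr_ge0.
by rewrite mulr0 pp_0 // mulr_ge0_le0 // ltW.
Qed.

Lemma pp_sq_upper z dd :
  pos_part (z + dd) ^+ 2 <= pos_part z ^+ 2 + 2 * pos_part z * dd + dd ^+ 2.
Proof.
case: (pp_cases z) => [[h1 ->]|[h1 ->]];
case: (pp_cases (z + dd)) => [[h2 ->]|[h2 ->]]; nra.
Qed.

Lemma pp_le_conv a b t :  0 <= t <= 1 ->
  pos_part ((1 - t) * a + t * b) <= (1 - t) * pos_part a + t * pos_part b.
Proof.
move=> /andP[t0 t1].
have ha := pp_ge a; have hb := pp_ge b; have ha0 := pp_ge0 a; have hb0 := pp_ge0 b.
case: (pp_cases ((1 - t) * a + t * b)) => [[h1 ->]|[h1 ->]]; nra.
Qed.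

Lemma pp_sq_conv a b t : 0 <= t <= 1 ->
  pos_part ((1 - t) * a + t * b) ^+ 2 <= (1 - t) * pos_part a ^+ 2 + t * pos_part b ^+ 2.
Proof.
move=> ht; have h := pp_le_conv a b ht; move: ht => /andP[t0 t1].
have h0 := pp_ge0 ((1 - t) * a + t * b).
have ha0 := pp_ge0 a; have hb0 := pp_ge0 b.
set u := pos_part _ in h h0 *; set A := pos_part a in h ha0 *; set B := pos_part b in h hb0 *.
have h2 : u ^+ 2 <= ((1 - t) * A + t * B) ^+ 2 by nra.
have h3 : ((1 - t) * A + t * B) ^+ 2 <= (1 - t) * A ^+ 2 + t * B ^+ 2.
  have : 0 <= t * (1 - t) * (A - B) ^+ 2 by apply: mulr_ge0; [nra| apply: sqr_ge0].
  nra.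
exact: le_trans h2 h3.
Qed.

Lemma limit_le0 X c e : 0 <= c -> 0 < e ->
  (forall t, 0 < t -> t <= e -> X <= t * c) -> X <= 0.
Proof.
move=> c0 e0 H; rewrite leNgt; apply/negP => X0.
set D := X + e * (c + 1).
have D0 : 0 < D by rewrite /D; nra.
set t := e * X / D.
have htD : t * D = e * X by rewrite /t mulrVK // unitfE gt_eqF.
have t0 : 0 < t by rewrite /t divr_gt0 // mulr_gt0.
have hD : D = X + e * (c + 1) by [].
clearbody t D.
have te : t <= e by nra.
have := H t t0 te. nra.
Qed.

Lemma sumsq_lin (I : finType) (u v : I -> R) a b :
  \sum_i (a * u i + b * v i) ^+ 2 =
  a ^+ 2 * \sum_i u i ^+ 2 + 2 * a * b * \sum_i u i * v i + b ^+ 2 * \sum_i v i ^+ 2.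
Proof.
transitivity (\sum_i (a ^+ 2 * u i ^+ 2 + (2 * a * b) * (u i * v i) + b ^+ 2 * v i ^+ 2)).
  by apply: eq_bigr => i _; ring.
by rewrite !big_split /= -!mulr_sumr.
Qed.

Lemma CS_sq (I : finType) (u v : I -> R) :
  (\sum_i u i * v i) ^+ 2 <= (\sum_i u i ^+ 2) * (\sum_i v i ^+ 2).
Proof.
set A := \sum_i u i ^+ 2; set B := \sum_i u i * v i; set C := \sum_i v i ^+ 2.
have A0 : 0 <= A by apply: sumr_ge0 => i _; apply: sqr_ge0.
have C0 : 0 <= C by apply: sumr_ge0 => i _; apply: sqr_ge0.
case: (ltP 0 A) => hA.
  have := sumsq_lin u v B (- A). rewrite -/A -/B -/C => E.
  have : 0 <= \sum_i (B * u i + - A * v i) ^+ 2 by apply: sumr_ge0 => i _; apply: sqr_ge0.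
  rewrite E => h.
  have h2 : 0 <= A * (A * C - B ^+ 2) by nra.
  rewrite pmulr_rge0 // in h2; lra.
have A00 : A = 0 by lra.
have u0 : forall i, u i = 0.
  move=> i; apply/eqP; rewrite -sqrf_eq0; apply/eqP.
  move: A00; rewrite /A => H; apply: (psumr_eq0P _ H) => // j _; apply: sqr_ge0.
have -> : B = 0 by rewrite /B big1 // => i _; rewrite u0 mul0r.
rewrite A00 expr0n /= mul0r; lra.
Qed.

Lemma sq_le_bounds (x y : R) : 0 <= y -> x ^+ 2 <= y ^+ 2 -> - y <= x <= y.
Proof. move=> y0 h; apply/andP; split; nra. Qed.

Lemma CS (I : finType) (u v : I -> R) :
  - (Num.sqrt (\sum_i u i ^+ 2) * Num.sqrt (\sum_i v i ^+ 2)) <= \sum_i u i * v i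
    <= Num.sqrt (\sum_i u i ^+ 2) * Num.sqrt (\sum_i v i ^+ 2).
Proof.
have A0 : 0 <= \sum_i u i ^+ 2 by apply: sumr_ge0 => i _; apply: sqr_ge0.
have C0 : 0 <= \sum_i v i ^+ 2 by apply: sumr_ge0 => i _; apply: sqr_ge0.
apply: sq_le_bounds; first by apply: mulr_ge0; apply: sqrtr_ge0.
by rewrite exprMn !sqr_sqrtr //; apply: CS_sq.
Qed.

End Gen.

Section Spec.
Variables (R : realType) (n K p : nat) (x : 'I_n -> 'I_p -> R)
  (d s : 'I_n -> 'I_K -> 'I_n) (L U eta : R).
Hypothesis eta0 : 0 < eta.
Local Notation Q := (pidx n K).
Local Notation C := (Cmat x d s).

Definition Zf (m : 'I_p -> R) (q : Q) : R := tvec L U q - \sum_j m j * C j q.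
Definition Pform (lam : R) (m : 'I_p -> R) : R :=
  \sum_q pos_part (Zf m q) ^+ 2 + lam * (\sum_j m j + eta / 2 * \sum_j m j ^+ 2).

Lemma sum_pidx (G : Q -> R) :
  \sum_q G q = \sum_(i : 'I_n) (\sum_(r < K) G (i, r, true) + \sum_(r < K) G (i, r, false)).
Proof.
have -> : \sum_q G q = \sum_(ir : 'I_n * 'I_K) \sum_(b : bool) G (ir, b).
  by rewrite (pair_bigA _ (fun ir b => G (ir, b))); apply: eq_bigr => -[ir b].
have -> : \sum_(ir : 'I_n * 'I_K) \sum_(b : bool) G (ir, b) =
   \sum_(i : 'I_n) \sum_(r < K) \sum_(b : bool) G (i, r, b).
  by rewrite (pair_bigA _ (fun i r => \sum_(b : bool) G (i, r, b))); apply: eq_bigr => -[i r].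
apply: eq_bigr => i _; rewrite -big_split /=; apply: eq_bigr => r _.
by rewrite big_bool.
Qed.

Lemma Pobj_form lam m : Pobj x d s L U eta lam m = Pform lam m.
Proof.
rewrite /Pobj /Pform sum_pidx; congr (_ + _).
apply: eq_bigr => i _; congr (_ + _); apply: eq_bigr => r _;
  rewrite /ell /Zf /dotp /Cmat /tvec /partner /= //.
congr (pos_part (_ - _) ^+ 2); rewrite -sumrN; apply: eq_bigr => j _.
by rewrite mulrN.
Qed.

Definition alph (m : 'I_p -> R) (q : Q) : R := 2 * pos_part (Zf m q).
Local Notation Crow := (Crow_mul x d s).

Definition bump (m : 'I_p -> R) (j : 'I_p) (sv : R) : 'I_p -> R :=
  fun i => m i + (if i == j then sv else 0).

Lemma sum_bump (F : 'I_p -> R) (j : 'I_p) sv :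
  \sum_i (if i == j then sv else 0) * F i = sv * F j.
Proof.
by rewrite (bigD1 j) //= eqxx big1 ?addr0 // => i /negbTE ->; rewrite mul0r.
Qed.

Lemma sum_ite (F : 'I_p -> R) (j : 'I_p) :
  \sum_i (if i == j then F i else 0) = F j.
Proof.
by rewrite (bigD1 j) //= eqxx big1 ?addr0 // => i /negbTE ->.
Qed.

Lemma Zf_bump m j sv q : Zf (bump m j sv) q = Zf m q + (- sv * C j q).
Proof.
rewrite /Zf /bump.
have -> : \sum_i (m i + (if i == j then sv else 0)) * C i q =
   \sum_i m i * C i q + \sum_i (if i == j then sv else 0) * C i q.
  by rewrite -big_split; apply: eq_bigr => i _; rewrite mulrDl.
rewrite sum_bump; ring.
Qed.

Lemma pert lam m j sv :
  Pform lam (bump m j sv) <= Pform lam m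
    + sv * (lam + lam * eta * m j - Crow j (alph m))
    + sv ^+ 2 * (\sum_q C j q ^+ 2 + lam * eta / 2).
Proof.
rewrite /Pform.
have h1 : \sum_q pos_part (Zf (bump m j sv) q) ^+ 2 <=
   \sum_q (pos_part (Zf m q) ^+ 2 + (- sv) * (C j q * alph m q) + sv ^+ 2 * C j q ^+ 2).
  apply: ler_sum => q _; rewrite Zf_bump.
  apply: (le_trans (pp_sq_upper _ _)); rewrite /alph; apply: eqle; ring.
rewrite !big_split /= -!mulr_sumr in h1.
have h2 : \sum_i bump m j sv i = \sum_i m i + sv.
  rewrite /bump big_split /=; congr (_ + _).
  exact: (sum_ite (fun _ => sv)).
have h3 : \sum_i bump m j sv i ^+ 2 = \sum_i m i ^+ 2 + (2 * sv * m j + sv ^+ 2).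
  rewrite -(sum_ite (fun i => 2 * sv * m i + sv ^+ 2) j) -big_split /=.
  apply: eq_bigr => i _; rewrite /bump; case: (i == j); ring.
rewrite h2 h3.
have -> : Crow j (alph m) = \sum_q C j q * alph m q by [].
lra.
Qed.

Lemma bump_ge0 m j sv : (forall i, 0 <= m i) -> 0 <= m j + sv ->
  forall i, 0 <= bump m j sv i.
Proof.
move=> hm hj i; rewrite /bump; case: eqP => [->|_] //; rewrite addr0; exact: hm.
Qed.

Lemma kkt lam m : 0 < lam -> (forall i, 0 <= m i) ->
  (forall m', (forall i, 0 <= m' i) -> Pform lam m <= Pform lam m') ->
  forall j, 0 <= lam + lam * eta * m j - Crow j (alph m) /\
    (0 < m j -> lam + lam * eta * m j - Crow j (alph m) = 0).
Proof.
move=> lam0 hm opt j.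
set g := lam + lam * eta * m j - Crow j (alph m).
set B := \sum_q C j q ^+ 2 + lam * eta / 2.
have B0 : 0 <= B.
  rewrite /B; apply: addr_ge0; first by apply: sumr_ge0 => q _; apply: sqr_ge0.
  apply: divr_ge0 => //; apply: mulr_ge0; exact: ltW.
have key : forall sv, 0 <= m j + sv -> 0 <= sv * g + sv ^+ 2 * B.
  move=> sv h; have := opt _ (bump_ge0 hm h); have := pert lam m j sv.
  rewrite -/g -/B; lra.
have g0 : 0 <= g.
  rewrite -oppr_le0; apply: (@limit_le0 _ (- g) B 1) => // t t0 t1.
  have := key t; rewrite (_ : 0 <= m j + t) ?(addr_ge0 (hm j) (ltW t0)) // => h.
  have : 0 <= t * (g + t * B) by lra.
  rewrite pmulr_rge0 //; lra.
split => // mj0.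
apply/eqP; rewrite eq_le g0 andbT.
apply: (@limit_le0 _ g B (m j)) => // t t0 t1.
have := key (- t); rewrite (_ : 0 <= m j + - t); last by lra.
move=> h.
have : 0 <= t * (t * B - g) by rewrite sqrrN in h; lra.
rewrite pmulr_rge0 //; lra.
Qed.

Definition E1 (z bq : R) := pos_part z ^+ 2 - bq * z + bq ^+ 2 / 4.
Definition E2 lam (mj c : R) := lam * mj + lam * eta / 2 * mj ^+ 2 - mj * c
   + lam * eta / 2 * ((lam * eta)^-1 * pos_part (c - lam)) ^+ 2.

Lemma gap_id lam m b : Pform lam m - Dobj x d s L U eta lam b =
  \sum_q E1 (Zf m q) (b q) + \sum_j E2 lam (m j) (Crow j b).
Proof.
have hx : \sum_q b q * Zf m q = \sum_q tvec L U q * b q - \sum_j m j * Crow j b.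
  rewrite /Zf.
  transitivity (\sum_q tvec L U q * b q - \sum_q \sum_j m j * (C j q * b q)).
    rewrite -sumrB; apply: eq_bigr => q _; rewrite mulrBr mulr_sumr mulrC; congr (_ - _).
    by apply: eq_bigr => j _; ring.
  congr (_ - _); rewrite exchange_big /=; apply: eq_bigr => j _.
  by rewrite /Crow_mul mulr_sumr.
have e1 : \sum_q E1 (Zf m q) (b q) =
   \sum_q pos_part (Zf m q) ^+ 2 - \sum_q b q * Zf m q + (\sum_q b q ^+ 2) / 4.
  by rewrite /E1 big_split /= sumrB mulr_suml.
have e2 : \sum_j E2 lam (m j) (Crow j b) =
   lam * \sum_j m j + lam * eta / 2 * \sum_j m j ^+ 2 - \sum_j m j * Crow j b
   + lam * eta / 2 * \sum_j ((lam * eta)^-1 * pos_part (Crow j b - lam)) ^+ 2.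
  by rewrite /E2 big_split /= sumrB big_split /= -!mulr_sumr.
rewrite e1 e2 hx /Pform /Dobj.
set S1 := \sum_q _; set S2 := \sum_q _; lra.
Qed.

Lemma E1_ge z bq : 0 <= bq -> (2 * pos_part z - bq) ^+ 2 / 4 <= E1 z bq.
Proof.
move=> b0; rewrite /E1.
case: (pp_cases z) => [[h1 ->]|[h1 ->]]; nra.
Qed.

Lemma E1_eq z : E1 z (2 * pos_part z) = 0.
Proof.
rewrite /E1; case: (pp_cases z) => [[h1 ->]|[h1 ->]]; field; rewrite ?pnatr_eq0 //.
Qed.

Lemma E2_ge lam mj c : 0 < lam -> 0 <= mj -> 0 <= E2 lam mj c.
Proof.
move=> l0 m0; rewrite /E2.
have le0 : 0 < lam * eta by apply: mulr_gt0.
have hl : lam * eta / 2 = (lam * eta) / 2 by [].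
move: le0; set le := lam * eta => le0.
have ie0 : 0 < le^-1 by rewrite invr_gt0.
case: (pp_cases (c - lam)) => [[h1 ->]|[h1 ->]].
  have -> : lam * mj + le / 2 * mj ^+ 2 - mj * c + le / 2 * (le^-1 * (c - lam)) ^+ 2
     = le^-1 / 2 * (le * mj - (c - lam)) ^+ 2.
    by field; rewrite gt_eqF.
  apply: mulr_ge0; [apply: divr_ge0; lra|apply: sqr_ge0].
rewrite mulr0 expr0n /= mulr0 addr0; nra.
Qed.

Lemma E2_eq lam mj c : 0 < lam -> 0 <= mj ->
  0 <= lam + lam * eta * mj - c -> (0 < mj -> lam + lam * eta * mj - c = 0) ->
  E2 lam mj c = 0.
Proof.
move=> l0 m0 g0 g1; rewrite /E2.
have le0 : 0 < lam * eta by apply: mulr_gt0.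
set le := lam * eta in le0 g0 g1 *.
have hie : le^-1 * le = 1 by rewrite mulVf // gt_eqF.
set ie := le^-1 in hie *.
have hl : lam * eta / 2 = le / 2 by [].
rewrite hl.
case: (ltP 0 mj) => mj0.
  have hc : c = lam + le * mj by have := g1 mj0; lra.
  rewrite hc pp_id; last by nra.
  have -> : lam + le * mj - lam = le * mj by ring.
  have -> : ie * (le * mj) = mj by rewrite mulrA hie mul1r.
  by field; rewrite ?pnatr_eq0.
have mj00 : mj = 0 by lra.
rewrite mj00 mulr0 addr0 in g0; rewrite mj00.
rewrite pp_0; last by lra.
rewrite mulr0 expr0n /= !mulr0 !mul0r; lra.
Qed.

Lemma weak_dual lam m b : 0 < lam -> (forall i, 0 <= m i) -> (forall q, 0 <= b q) ->
  Dobj x d s L U eta lam b + 1 / 4 * \sum_q (alph m q - b q) ^+ 2 <= Pform lam m.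
Proof.
move=> l0 hm hb.
have h := gap_id lam m b.
have h1 : \sum_q (alph m q - b q) ^+ 2 / 4 <= \sum_q E1 (Zf m q) (b q).
  by apply: ler_sum => q _; apply: E1_ge.
have h2 : 0 <= \sum_j E2 lam (m j) (Crow j b).
  by apply: sumr_ge0 => j _; apply: E2_ge.
rewrite -mulr_suml in h1.
lra.
Qed.

Lemma strong_dual lam m : 0 < lam -> (forall i, 0 <= m i) ->
  (forall j, 0 <= lam + lam * eta * m j - Crow j (alph m) /\
    (0 < m j -> lam + lam * eta * m j - Crow j (alph m) = 0)) ->
  Pform lam m = Dobj x d s L U eta lam (alph m).
Proof.
move=> l0 hm hk.
have h := gap_id lam m (alph m).
rewrite big1 ?add0r in h; last by move=> q _; rewrite /alph E1_eq.
rewrite big1 in h; last by move=> j _; have [? ?] := hk j; apply: E2_eq.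
by apply/eqP; rewrite -subr_eq0 h.
Qed.

Local Notation Dob := (Dobj x d s L U eta).

Lemma Crow_lin (c1 c2 : R) (u v : Q -> R) j :
  Crow j (fun q => c1 * u q + c2 * v q) = c1 * Crow j u + c2 * Crow j v.
Proof.
rewrite /Crow_mul !mulr_sumr -big_split /=; apply: eq_bigr => q _; ring.
Qed.

Lemma Crow_scale (c : R) (u : Q -> R) j :
  Crow j (fun q => c * u q) = c * Crow j u.
Proof. rewrite /Crow_mul mulr_sumr; apply: eq_bigr => q _; ring. Qed.

Lemma Dob_scale c lam w : 0 < c -> 0 < lam ->
  Dob (c * lam) (fun q => c * w q) = c * (Dob lam w + (1 - c) / 4 * \sum_q w q ^+ 2).
Proof.
move=> c0 l0; rewrite /Dobj.
have -> : \sum_k ((c * lam * eta)^-1 * pos_part (Crow k (fun q => c * w q) - c * lam)) ^+ 2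
   = \sum_k ((lam * eta)^-1 * pos_part (Crow k w - lam)) ^+ 2.
  apply: eq_bigr => k _; rewrite Crow_scale -mulrBr pp_scale ?ltW //.
  congr (_ ^+ 2); field; rewrite !gt_eqF //.
under eq_bigr => q _ do rewrite exprMn.
under [X in _ + X - _]eq_bigr => q _ do rewrite mulrCA.
rewrite -!mulr_sumr.
ring.
Qed.

Lemma sumsq_diff (u v : Q -> R) :
  \sum_q (u q - v q) ^+ 2 = \sum_q u q ^+ 2 - 2 * \sum_q u q * v q + \sum_q v q ^+ 2.
Proof.
have := sumsq_lin u v 1 (-1).
have -> : \sum_i (1 * u i + -1 * v i) ^+ 2 = \sum_q (u q - v q) ^+ 2.
  by apply: eq_bigr => q _; ring.
move=> ->; ring.
Qed.

Lemma dual_gap lam a : 0 < lam -> (forall q, 0 <= a q) ->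
  (forall b, (forall q, 0 <= b q) -> Dob lam b <= Dob lam a) ->
  forall b, (forall q, 0 <= b q) ->
  Dob lam b + 1 / 4 * \sum_q (b q - a q) ^+ 2 <= Dob lam a.
Proof.
move=> l0 ha opt b hb.
pose Fs (v : Q -> R) := \sum_k ((lam * eta)^-1 * pos_part (Crow k v - lam)) ^+ 2.
pose Tl (v : Q -> R) := \sum_q tvec L U q * v q.
have DE : forall v, Dob lam v = - (1 / 4) * \sum_q v q ^+ 2 + Tl v - lam * eta / 2 * Fs v.
  by [].
have k0 : 0 <= lam * eta / 2 by apply: divr_ge0 => //; apply: mulr_ge0; apply: ltW.
set A2 := \sum_q a q ^+ 2; set B2 := \sum_q b q ^+ 2; set Sab := \sum_q a q * b q.
set X := (Tl b - lam * eta / 2 * Fs b) - (Tl a - lam * eta / 2 * Fs a) - (Sab - A2) / 2.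
have main : X <= 0.
  apply: (@limit_le0 _ X ((A2 - 2 * Sab + B2) / 4) 1) => //.
    have : 0 <= \sum_q (a q - b q) ^+ 2 by apply: sumr_ge0 => q _; apply: sqr_ge0.
    rewrite sumsq_diff -/A2 -/B2 -/Sab => h; apply: divr_ge0 => //; lra.
  move=> t t0 t1.
  pose g := fun q => (1 - t) * a q + t * b q.
  have hg : forall q, 0 <= g q.
    by move=> q; rewrite /g; apply: addr_ge0; apply: mulr_ge0 => //; lra.
  have hopt := opt g hg.
  have hSq : \sum_q g q ^+ 2 = (1 - t) ^+ 2 * A2 + 2 * (1 - t) * t * Sab + t ^+ 2 * B2.
    exact: sumsq_lin.
  have hT : Tl g = (1 - t) * Tl a + t * Tl b.
    rewrite /Tl !mulr_sumr -big_split /=; apply: eq_bigr => q _; rewrite /g; ring.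
  have hF : Fs g <= (1 - t) * Fs a + t * Fs b.
    rewrite /Fs !mulr_sumr -big_split /=; apply: ler_sum => k _.
    rewrite /g Crow_lin.
    have -> : (1 - t) * Crow k a + t * Crow k b - lam
        = (1 - t) * (Crow k a - lam) + t * (Crow k b - lam) by ring.
    rewrite !exprMn.
    have ht : 0 <= t <= 1 by apply/andP; split; lra.
    have := pp_sq_conv (Crow k a - lam) (Crow k b - lam) ht.
    have := sqr_ge0 ((lam * eta)^-1).
    set P := pos_part _; set Pa := pos_part (Crow k a - lam); set Pb := pos_part _.
    set I2 := _ ^+ 2. nra.
  have hkF : lam * eta / 2 * Fs g <= lam * eta / 2 * ((1 - t) * Fs a + t * Fs b).
    exact: ler_wpM2l.
  rewrite !DE hSq hT -/A2 in hopt.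
  have : 0 <= t * (t * ((A2 - 2 * Sab + B2) / 4) - X) by rewrite /X; nra.
  rewrite pmulr_rge0 //; lra.
rewrite !DE -/A2 -/B2 sumsq_diff -/B2 -/A2.
have -> : \sum_q b q * a q = Sab by apply: eq_bigr => q _; rewrite mulrC.
rewrite /X in main; lra.
Qed.

Lemma sqrt_le_sq (a y : R) : 0 <= y -> a <= y ^+ 2 -> Num.sqrt a <= y.
Proof.
move=> y0 h; apply: (le_trans (ler_wsqrtr h)); rewrite sqrtr_sqr ger0_norm //.
Qed.

Lemma main lam lam0 eps (a0star a0 : Q -> R) (mstar : 'I_p -> R) (k : 'I_p) :
  0 < lam -> lam <= lam0 ->
  (forall q, 0 <= a0star q) ->
  (forall a : Q -> R, (forall q, 0 <= a q) -> Dob lam0 a <= Dob lam0 a0star) ->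
  0 <= eps ->
  norm2_q (fun q => a0 q - a0star q) <= eps ->
  (forall j, 0 <= mstar j) ->
  (forall m : 'I_p -> R, (forall j, 0 <= m j) ->
     Pobj x d s L U eta lam mstar <= Pobj x d s L U eta lam m) ->
  lambda_a x d s lam0 eps a0 k <= lam ->
  mstar k = 0.
Proof.
move=> l0 ll0 hB optB eps0 hdist hm optm hla.
have l00 : 0 < lam0 by apply: lt_le_trans ll0.
have optm' : forall m, (forall j, 0 <= m j) -> Pform lam mstar <= Pform lam m.
  by move=> m hm'; rewrite -!Pobj_form; apply: optm.
have hk := kkt l0 hm optm'.
set A := alph mstar.
set B := a0star.
have hA : forall q, 0 <= A q by move=> q; rewrite /A /alph; apply: mulr_ge0 => //; apply: pp_ge0.
set r := lam / lam0.
have r0 : 0 < r by apply: divr_gt0.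
have r1 : r <= 1 by rewrite /r ler_pdivrMr // mul1r.
set rho := lam0 / lam.
have rrho : r * rho = 1 by rewrite /r /rho; field; rewrite !gt_eqF.
have rho0 : 0 < rho by apply: divr_gt0.
have hl : r * lam0 = lam by rewrite /r; field; rewrite gt_eqF.
have hl0 : rho * lam = lam0 by rewrite /rho; field; rewrite gt_eqF.
set SAA := \sum_q A q ^+ 2; set SBB := \sum_q B q ^+ 2; set SAB := \sum_q A q * B q.
set DA := Dob lam A; set DB := Dob lam0 B.
have I1 : Dob (r * lam0) (fun q => r * B q) + 1 / 4 * \sum_q (A q - r * B q) ^+ 2 <= DA.
  rewrite hl; apply: (le_trans (weak_dual _ _ _)) => //.
    by move=> q; apply: mulr_ge0; [apply: ltW|].
  by rewrite (strong_dual l0 hm hk).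
rewrite Dob_scale // -/DB -/SBB in I1.
have eq1 : \sum_q (A q - r * B q) ^+ 2 = SAA - 2 * r * SAB + r ^+ 2 * SBB.
  rewrite -[RHS](_ : \sum_q (1 * A q + (- r) * B q) ^+ 2 = _).
    by apply: eq_bigr => q _; ring.
  rewrite sumsq_lin -/SAA -/SBB -/SAB; ring.
rewrite eq1 in I1.
have I2 : Dob (rho * lam) (fun q => rho * A q) + 1 / 4 * \sum_q (rho * A q - B q) ^+ 2 <= DB.
  rewrite hl0; apply: dual_gap => //.
  by move=> q; apply: mulr_ge0; [apply: ltW|].
rewrite Dob_scale // -/DA -/SAA in I2.
have eq2 : \sum_q (rho * A q - B q) ^+ 2 = rho ^+ 2 * SAA - 2 * rho * SAB + SBB.
  rewrite -[RHS](_ : \sum_q (rho * A q + (- 1) * B q) ^+ 2 = _).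
    by apply: eq_bigr => q _; ring.
  rewrite sumsq_lin -/SAA -/SBB -/SAB; ring.
rewrite eq2 in I2.
have I2' := ler_wpM2l (ltW r0) I2.
have E : r * (rho * (DA + (1 - rho) / 4 * SAA) + 1 / 4 * (rho ^+ 2 * SAA - 2 * rho * SAB + SBB))
   = DA + SAA / 4 - SAB / 2 + r * SBB / 4.
  have -> : rho = r^-1 by rewrite /rho /r invf_div.
  by field; rewrite gt_eqF.
rewrite E in I2'.
have ball : SAA - (1 + r) * SAB + r * SBB <= 0 by lra.
set c := (1 + r) / 2; set rh := (1 - r) / 2.
have c0 : 0 <= c by rewrite /c; apply: divr_ge0; lra.
have rh0 : 0 <= rh by rewrite /rh; apply: divr_ge0; lra.
pose D := fun q => 1 * A q + (- c) * B q.
have hD : \sum_q D q ^+ 2 <= (rh * Num.sqrt SBB) ^+ 2.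
  rewrite /D sumsq_lin -/SAA -/SBB -/SAB exprMn sqr_sqrtr; last first.
    by apply: sumr_ge0 => q _; apply: sqr_ge0.
  rewrite /c /rh; lra.
have SBB0 : 0 <= SBB by apply: sumr_ge0 => q _; apply: sqr_ge0.
set N := Crow_norm x d s k.
have N0 : 0 <= N by apply: sqrtr_ge0.
have hCD : Crow k D <= N * (rh * Num.sqrt SBB).
  have := CS (C k) D; move=> /andP[_ h].
  have h' : Crow k D <= N * Num.sqrt (\sum_q D q ^+ 2) by exact: h.
  apply: (le_trans h').
  apply: ler_wpM2l => //; apply: sqrt_le_sq => //; apply: mulr_ge0 => //; apply: sqrtr_ge0.
have hCA : Crow k A <= c * Crow k B + N * (rh * Num.sqrt SBB).
  move: hCD; rewrite /D Crow_lin; lra.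
pose dl := fun q => a0 q - B q.
have hdl : Num.sqrt (\sum_q dl q ^+ 2) <= eps by [].
have hCB : Crow k B <= Crow k a0 + N * eps.
  have := CS (C k) dl; move=> /andP[h _].
  have e : Crow k dl = Crow k a0 - Crow k B.
    by rewrite /Crow_mul -sumrB; apply: eq_bigr => q _; rewrite /dl; ring.
  have : N * Num.sqrt (\sum_q dl q ^+ 2) <= N * eps by apply: ler_wpM2l.
  have h' : - (N * Num.sqrt (\sum_q dl q ^+ 2)) <= Crow k dl by exact: h.
  lra.
set n0 := norm2_q a0.
have n00 : 0 <= n0 by apply: sqrtr_ge0.
have hnB : Num.sqrt SBB <= n0 + eps.
  apply: sqrt_le_sq; first by lra.
  have eB : SBB = \sum_q (1 * a0 q + (-1) * dl q) ^+ 2.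
    by apply: eq_bigr => q _; rewrite /dl; ring.
  rewrite eB sumsq_lin.
  have := CS a0 dl; move=> /andP[h _].
  have hd0 : 0 <= Num.sqrt (\sum_q dl q ^+ 2) by apply: sqrtr_ge0.
  have S00 : 0 <= \sum_q a0 q ^+ 2 by apply: sumr_ge0 => q _; apply: sqr_ge0.
  have Sdd : 0 <= \sum_q dl q ^+ 2 by apply: sumr_ge0 => q _; apply: sqr_ge0.
  have e1 := sqr_sqrtr S00; have e2 := sqr_sqrtr Sdd.
  rewrite /n0 /norm2_q.
  set s0 := Num.sqrt (\sum_q a0 q ^+ 2) in h e1 *.
  set sd := Num.sqrt (\sum_q dl q ^+ 2) in h e2 hd0 hdl *.
  have s00 : 0 <= s0 by apply: sqrtr_ge0.
  have hh1 : s0 * sd <= s0 * eps by apply: ler_wpM2l.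
  have hh2 : sd ^+ 2 <= eps ^+ 2 by rewrite ler_sqr ?nnegrE //; lra.
  rewrite -e1 -e2 expr1n sqrrN !mul1r; nra.
have hCa0 : Crow k a0 <= n0 * N.
  have := CS (C k) a0; move=> /andP[_ h]; rewrite mulrC; exact: h.
have den0 : 0 < 2 * lam0 + n0 * N - Crow k a0 by lra.
move: hla; rewrite /lambda_a -/N -/n0 ler_pdivrMr // => hla.
have hla' : 2 * eps * N + n0 * N + Crow k a0 <= r * (2 * lam0 + n0 * N - Crow k a0).
  rewrite -(ler_pM2l l00); apply: (le_trans hla); rewrite -hl; apply: eqle; ring.
have final : Crow k A <= lam.
  rewrite -hl.
  have h1 : c * Crow k B <= c * (Crow k a0 + N * eps) by apply: ler_wpM2l.
  have h2 : N * (rh * Num.sqrt SBB) <= N * (rh * (n0 + eps)).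
    by apply: ler_wpM2l => //; apply: ler_wpM2l.
  move: h1 h2 hCA hla'; rewrite /c /rh; nra.
have [g0 g1] := hk k.
apply/eqP; rewrite eq_le hm andbT.
rewrite leNgt; apply/negP => mk0.
have := g1 mk0.
have : 0 < lam * eta * mstar k by apply: mulr_gt0 => //; apply: mulr_gt0.
rewrite -/A; lra.
Qed.

End Spec.

Theorem theorem6 (R : realType) (n K p : nat)
  (x : 'I_n -> 'I_p -> R) (d s : 'I_n -> 'I_K -> 'I_n)
  (L U eta lam lam0 eps : R)
  (a0star a0 : pidx n K -> R) (mstar : 'I_p -> R) (k : 'I_p) :
  (0 < n)%N -> (0 < K)%N -> (0 < p)%N ->
  (forall i j, 0 <= x i j) ->
  (forall i, injective (d i)) -> (forall i, injective (s i)) ->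
  0 <= U -> U <= L -> 0 < eta ->
  0 < lam -> lam <= lam0 ->
  (* alpha0* is the optimal solution of max_{alpha >= 0} D_{lam0}(alpha) *)
  (forall q, 0 <= a0star q) ->
  (forall a : pidx n K -> R, (forall q, 0 <= a q) ->
     Dobj x d s L U eta lam0 a <= Dobj x d s L U eta lam0 a0star) ->
  0 <= eps ->
  norm2_q (fun q => a0 q - a0star q) <= eps ->
  (* m* is the optimal solution of min_{m >= 0} P_lam(m) *)
  (forall j, 0 <= mstar j) ->
  (forall m : 'I_p -> R, (forall j, 0 <= m j) ->
     Pobj x d s L U eta lam mstar <= Pobj x d s L U eta lam m) ->
  lambda_a x d s lam0 eps a0 k <= lam ->
  mstar k = 0.
Proof.
move=> _ _ _ _ _ _ _ _ heta l0 ll0 hB optB eps0 hdist hm optm hla.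
exact: (main heta l0 ll0 hB optB eps0 hdist hm optm hla).
Qed.
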